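(* For all $\Gamma,\Delta\subseteq\mathcal{L}_{\Box\!\!\rightarrow}$: $(\Gamma,\Delta)\in\mathsf{N4CK}$ iff $(E^\pm(\Gamma),E^\pm(\Delta))\in\mathsf{IntCK}^{e+}$. That is, $E^\pm$ faithfully embeds $\mathsf{N4CK}$ into the extended positive intuitionistic conditional logic $\mathsf{IntCK}^{e+}$.
   Context: $\mathcal{L}_{\Box\!\!\rightarrow}$ is built from variables $p_0,p_1,\dots$ with $\wedge,\vee,\to$, strong negation $\sim$, and a binary would-conditional $\Box\!\!\rightarrow$. A Nelsonian conditional model is $(W,\leq,R,V^+,V^-)$ with $W\neq\emptyset$, $\leq$ a preorder, $V^\pm$ assigning upward-closed sets, $R\subseteq W\times(\mathcal{P}(W)\times\mathcal{P}(W))\times W$ satisfying for all $X,Y$: (c1) $w\leq w'$ and $R_{(X,Y)}(w,v)$ imply $R_{(X,Y)}(w',v')$ for some $v'\geq v$; (c2) $R_{(X,Y)}(w,v)$ and $v\leq v'$ imply $R_{(X,Y)}(w',v')$ for some $w'\geq w$. Verification $\models^+$/falsification $\models^-$: atoms by $V^\pm$; $\wedge$ verified iff both verified, falsified iff one falsified; $\vee$ dually; $\sim$ swaps; $w\models^+\psi\to\chi$ iff for all $v\geq w$, $v\models^+\psi$ implies $v\models^+\chi$; $w\models^-\psi\to\chi$ iff $w\models^+\psi$ and $w\models^-\chi$; $w\models^+\psi\Box\!\!\rightarrow\chi$ iff for all $v\geq w$ and $u$ with $R_{\|\psi\|}(v,u)$, $u\models^+\chi$; $w\models^-\psi\Box\!\!\rightarrow\chi$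 iff some $u$ has $R_{\|\psi\|}(w,u)$ and $u\models^-\chi$; $\|\psi\|=(\{w\mid w\models^+\psi\},\{w\mid w\models^-\psi\})$. $(\Gamma,\Delta)\in\mathsf{N4CK}$ iff no pointed such model verifies all of $\Gamma$ and none of $\Delta$. $\mathsf{IntCK}^{e+}$ is over the language with variables $p_i,q_i$, connectives $\wedge,\vee,\to$, primitive $\Box\!\!\rightarrow,\Diamond\!\!\rightarrow$ (no negation); its models are $(W,\leq,R,V)$ with $\leq$ a preorder, $V$ assigning upward-closed sets, $R\subseteq W\times\mathcal{P}(W)\times W$ such that for all $X$: if $w\leq w'$ and $R_X(w,v)$ then $R_X(w',v')$ for some $v'\geq v$; if $R_X(w,v)$ and $v\leq v'$ then $R_X(w',v')$ for some $w'\geq w$; satisfaction $\models^i$: intuitionistic for $\wedge,\vee,\to$; $w\models^i\psi\Box\!\!\rightarrow\chi$ iff for all $v\geq w$ and $u$ with $R_{\|\psi\|^i}(v,u)$, $u\models^i\chi$; $w\models^i\psi\Diamond\!\!\rightarrow\chi$ iff some $u$ has $R_{\|\psi\|^i}(w,u)$ and $u\models^i\chi$, where $\|\psi\|^i$ is the truth set; $(\Gamma,\Delta)\in\mathsf{IntCK}^{e+}$ iff no pointed model satisfies all of $\Gamma$ and none of $\Delta$. The translation $E^\pm$: $E^\pm(p_i)=p_i$, $E^\pm(\sim p_i)=q_i$, $E^\pm(\phi\wedge\psi)=E^\pm(\phi)\wedge E^\pm(\psi)$, $E^\pm(\sim(\phi\wedge\psi))=E^\pm(\sim\phi)\vee E^\pm(\sim\psi)$,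 $E^\pm(\phi\vee\psi)=E^\pm(\phi)\vee E^\pm(\psi)$, $E^\pm(\sim(\phi\vee\psi))=E^\pm(\sim\phi)\wedge E^\pm(\sim\psi)$, $E^\pm(\sim\sim\phi)=E^\pm(\phi)$, $E^\pm(\phi\to\psi)=E^\pm(\phi)\to E^\pm(\psi)$, $E^\pm(\sim(\phi\to\psi))=E^\pm(\phi)\wedge E^\pm(\sim\psi)$, $E^\pm(\phi\Box\!\!\rightarrow\psi)=E^\pm(\phi)\Box\!\!\rightarrow(E^\pm(\sim\phi)\Box\!\!\rightarrow E^\pm(\psi))$, $E^\pm(\sim(\phi\Box\!\!\rightarrow\psi))=E^\pm(\phi)\Diamond\!\!\rightarrow(E^\pm(\sim\phi)\Diamond\!\!\rightarrow E^\pm(\sim\psi))$. *)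

(* Defs.v *)
(** Source language L_{□→}: variables p_i, ∧, ∨, →, strong negation ∼, would-conditional □→. *)
Inductive form : Type :=
| Var  : nat -> form
| And  : form -> form -> form
| Or   : form -> form -> form
| Imp  : form -> form -> form
| SNeg : form -> form
| Box  : form -> form -> form.

(** Target language of IntCK^{e+}: variables p_i, q_i; ∧, ∨, →; primitive □→ and ◇→. *)
Inductive iform : Type :=
| IP   : nat -> iform
| IQ   : nat -> iform
| IAnd : iform -> iform -> iform
| IOr  : iform -> iform -> iform
| IImp : iform -> iform -> iform
| IBox : iform -> iform -> iform
| IDia : iform -> iform -> iform.

Record NModel : Type := {
  nW : Type;
  nle : nW -> nW -> Prop;
  nle_refl : forall w, nle w w;
  nle_trans : forall u v w, nle u v -> nle v w -> nle u w;
  nR : (nW -> Prop) -> (nW -> Prop) -> nW -> nW -> Prop;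
  nVp : nat -> nW -> Prop;
  nVm : nat -> nW -> Prop;
  nVp_up : forall i w w', nle w w' -> nVp i w -> nVp i w';
  nVm_up : forall i w w', nle w w' -> nVm i w -> nVm i w';
  nc1 : forall X Y w w' v, nle w w' -> nR X Y w v ->
          exists v', nle v v' /\ nR X Y w' v';
  nc2 : forall X Y w v v', nR X Y w v -> nle v v' ->
          exists w', nle w w' /\ nR X Y w' v'
}.

(** Verification (b = true) and falsification (b = false). *)
Fixpoint nsat (M : NModel) (b : bool) (phi : form) (w : nW M) {struct phi} : Prop :=
  match phi with
  | Var i => if b then nVp M i w else nVm M i w
  | And a c => if b then nsat M true a w /\ nsat M true c w
               else nsat M false a w \/ nsat M false c w
  | Or a c => if b then nsat M true a w \/ nsat M true c w
              else nsat M false a w /\ nsat M false c w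
  | Imp a c => if b then (forall v, nle M w v -> nsat M true a v -> nsat M true c v)
               else nsat M true a w /\ nsat M false c w
  | SNeg a => nsat M (negb b) a w
  | Box a c => if b then
                 (forall v u, nle M w v ->
                    nR M (nsat M true a) (nsat M false a) v u -> nsat M true c u)
               else
                 (exists u, nR M (nsat M true a) (nsat M false a) w u /\ nsat M false c u)
  end.

Definition N4CK (Gamma Delta : form -> Prop) : Prop :=
  ~ exists (M : NModel) (w : nW M),
      (forall g, Gamma g -> nsat M true g w) /\
      (forall d, Delta d -> ~ nsat M true d w).

Record IModel : Type := {
  iW : Type;
  ile : iW -> iW -> Prop;
  ile_refl : forall w, ile w w;
  ile_trans : forall u v w, ile u v -> ile v w -> ile u w;
  iR : (iW -> Prop) -> iW -> iW -> Prop;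
  iVal : bool -> nat -> iW -> Prop; (* true: p_i, false: q_i *)
  iVal_up : forall b i w w', ile w w' -> iVal b i w -> iVal b i w';
  ic1 : forall X w w' v, ile w w' -> iR X w v -> exists v', ile v v' /\ iR X w' v';
  ic2 : forall X w v v', iR X w v -> ile v v' -> exists w', ile w w' /\ iR X w' v'
}.

Fixpoint isat (M : IModel) (phi : iform) (w : iW M) {struct phi} : Prop :=
  match phi with
  | IP i => iVal M true i w
  | IQ i => iVal M false i w
  | IAnd a c => isat M a w /\ isat M c w
  | IOr a c => isat M a w \/ isat M c w
  | IImp a c => forall v, ile M w v -> isat M a v -> isat M c v
  | IBox a c => forall v u, ile M w v -> iR M (isat M a) v u -> isat M c u
  | IDia a c => exists u, iR M (isat M a) w u /\ isat M c u
  end.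

Definition IntCKe (Gamma Delta : iform -> Prop) : Prop :=
  ~ exists (M : IModel) (w : iW M),
      (forall g, Gamma g -> isat M g w) /\
      (forall d, Delta d -> ~ isat M d w).

(** Translation: Etr true φ = E^±(φ), Etr false φ = E^±(∼φ). *)
Fixpoint Etr (b : bool) (phi : form) {struct phi} : iform :=
  match phi with
  | Var i => if b then IP i else IQ i
  | And a c => if b then IAnd (Etr true a) (Etr true c)
               else IOr (Etr false a) (Etr false c)
  | Or a c => if b then IOr (Etr true a) (Etr true c)
              else IAnd (Etr false a) (Etr false c)
  | Imp a c => if b then IImp (Etr true a) (Etr true c)
               else IAnd (Etr true a) (Etr false c)
  | SNeg a => Etr (negb b) a
  | Box a c => if b then IBox (Etr true a) (IBox (Etr false a) (Etr true c))
               else IDia (Etr true a) (IDia (Etr false a) (Etr false c))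
  end.

Definition Epm (phi : form) : iform := Etr true phi.

Definition Eimg (Gamma : form -> Prop) : iform -> Prop :=
  fun chi => exists phi, Gamma phi /\ chi = Epm phi.

(* Main.v *)
Require Import Defs.
From Stdlib Require Import FunctionalExtensionality PropExtensionality.

Lemma pred_ext {T : Type} (P Q : T -> Prop) : (forall x, P x <-> Q x) -> P = Q.
Proof. intro H; apply functional_extensionality; intro x; apply propositional_extensionality; apply H. Qed.

Section NofI.
Variable M : IModel.

Definition NI_R (X Y : iW M -> Prop) (w v : iW M) : Prop :=
  exists u, iR M X w u /\ iR M Y u v.

Lemma NI_c1 : forall X Y w w' v, ile M w w' -> NI_R X Y w v ->
  exists v', ile M v v' /\ NI_R X Y w' v'.
Proof.
  intros X Y w w' v Hw [u [H1 H2]].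
  destruct (ic1 M X w w' u Hw H1) as [u' [Hu H1']].
  destruct (ic1 M Y u u' v Hu H2) as [v' [Hv H2']].
  exists v'; split; [exact Hv | exists u'; auto].
Qed.

Lemma NI_c2 : forall X Y w v v', NI_R X Y w v -> ile M v v' ->
  exists w', ile M w w' /\ NI_R X Y w' v'.
Proof.
  intros X Y w v v' [u [H1 H2]] Hv.
  destruct (ic2 M Y u v v' H2 Hv) as [u' [Hu H2']].
  destruct (ic2 M X w u u' H1 Hu) as [w' [Hw H1']].
  exists w'; split; [exact Hw | exists u'; auto].
Qed.

Definition NofI : NModel := {|
  nW := iW M; nle := ile M; nle_refl := ile_refl M; nle_trans := ile_trans M;
  nR := NI_R; nVp := iVal M true; nVm := iVal M false;
  nVp_up := iVal_up M true; nVm_up := iVal_up M false;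
  nc1 := NI_c1; nc2 := NI_c2 |}.

Lemma NofI_sat : forall phi b w, nsat NofI b phi w <-> isat M (Etr b phi) w.
Proof.
  induction phi as [i|a IHa c IHc|a IHa c IHc|a IHa c IHc|a IHa|a IHa c IHc];
    intros b w; destruct b; simpl.
  - tauto.
  - tauto.
  - rewrite IHa, IHc; tauto.
  - rewrite IHa, IHc; tauto.
  - rewrite IHa, IHc; tauto.
  - rewrite IHa, IHc; tauto.
  - split; intros H v Hv Ha; apply IHc; apply H; auto; apply IHa; auto.
  - rewrite IHa, IHc; tauto.
  - apply IHa.
  - apply IHa.
  - assert (EA : nsat NofI true a = isat M (Etr true a)) by (apply pred_ext; intro; apply IHa).
    assert (EB : nsat NofI false a = isat M (Etr false a)) by (apply pred_ext; intro; apply IHa).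
    rewrite EA, EB. split.
    + intros H v m Hv HA v2 u Hm HB.
      destruct (ic2 M _ v m v2 HA Hm) as [v' [Hvv HA']].
      apply IHc. apply (H v' u). eapply ile_trans; eauto.
      exists v2; auto.
    + intros H v u Hv [m [HA HB]]. apply IHc.
      apply (H v m Hv HA m u (ile_refl M m) HB).
  - assert (EA : nsat NofI true a = isat M (Etr true a)) by (apply pred_ext; intro; apply IHa).
    assert (EB : nsat NofI false a = isat M (Etr false a)) by (apply pred_ext; intro; apply IHa).
    rewrite EA, EB. split.
    + intros [u [[m [HA HB]] HC]]. exists m; split; auto. exists u; split; auto. apply IHc; auto.
    + intros [m [HA [u [HB HC]]]]. exists u; split. exists m; auto. apply IHc; auto.
Qed.
End NofI.

Section IofN.
Variable M : NModel.
Definition SW : Type := (nW M + (nW M * (nW M -> Prop)))%type.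

Definition S_le (x y : SW) : Prop :=
  match x, y with
  | inl a, inl b => nle M a b
  | inr (a, X), inr (b, Y) => nle M a b /\ X = Y
  | _, _ => False
  end.

Definition S_R (X : SW -> Prop) (x y : SW) : Prop :=
  match x, y with
  | inl a, inr (b, Y) => a = b /\ Y = (fun z => X (inl z))
  | inr (a, Y), inl b => nR M Y (fun z => X (inl z)) a b
  | _, _ => False
  end.

Definition S_Val (b : bool) (i : nat) (x : SW) : Prop :=
  match x with
  | inl a => if b then nVp M i a else nVm M i a
  | inr _ => False
  end.

Lemma S_refl : forall w, S_le w w.
Proof. intros [a|[a X]]; simpl; auto using nle_refl. Qed.

Lemma S_trans : forall u v w, S_le u v -> S_le v w -> S_le u w.
Proof.
  intros [a|[a X]] [b|[b Y]] [c|[c Z]]; simpl; try tauto.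
  - apply nle_trans.
  - intros [H1 E1] [H2 E2]; split; [eapply nle_trans; eauto | congruence].
Qed.

Lemma S_Val_up : forall b i w w', S_le w w' -> S_Val b i w -> S_Val b i w'.
Proof.
  intros b i [a|[a X]] [c|[c Z]]; simpl; try tauto.
  destruct b; [apply nVp_up | apply nVm_up].
Qed.

Lemma S_c1 : forall X w w' v, S_le w w' -> S_R X w v -> exists v', S_le v v' /\ S_R X w' v'.
Proof.
  intros X [a|[a Xa]] [a'|[a' Xa']] [b|[b Xb]]; simpl; try tauto.
  - intros H [E1 E2]; subst. exists (inr (a', fun z => X (inl z))); simpl; auto.
  - intros [H E] HR; subst.
    destruct (nc1 M _ _ a a' b H HR) as [v' [Hv HR']].
    exists (inl v'); simpl; auto.
Qed.

Lemma S_c2 : forall X w v v', S_R X w v -> S_le v v' -> exists w', S_le w w' /\ S_R X w' v'.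
Proof.
  intros X [a|[a Xa]] [b|[b Xb]] [b'|[b' Xb']]; simpl; try tauto.
  - intros [E1 E2] [H E3]; subst. exists (inl b'); simpl; auto.
  - intros HR H.
    destruct (nc2 M _ _ a b b' HR H) as [w' [Hw HR']].
    exists (inr (w', Xa)); simpl; auto.
Qed.

Definition IofN : IModel := {|
  iW := SW; ile := S_le; ile_refl := S_refl; ile_trans := S_trans;
  iR := S_R; iVal := S_Val; iVal_up := S_Val_up; ic1 := S_c1; ic2 := S_c2 |}.

Lemma IofN_sat : forall phi b w, isat IofN (Etr b phi) (inl w) <-> nsat M b phi w.
Proof.
  induction phi as [i|a IHa c IHc|a IHa c IHc|a IHa c IHc|a IHa|a IHa c IHc];
    intros b w; destruct b; simpl.
  - tauto.
  - tauto.
  - rewrite IHa, IHc; tauto.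
  - rewrite IHa, IHc; tauto.
  - rewrite IHa, IHc; tauto.
  - rewrite IHa, IHc; tauto.
  - split.
    + intros H v Hv Ha. apply IHc. apply (H (inl v) Hv). apply IHa; auto.
    + intros H [v|[v X]] Hv; simpl in Hv; [|tauto].
      intro Ha. apply IHc. apply H; auto. apply IHa; auto.
  - rewrite IHa, IHc; tauto.
  - apply IHa.
  - apply IHa.
  - assert (EA : (fun z => isat IofN (Etr true a) (inl z)) = nsat M true a)
      by (apply pred_ext; intro; apply IHa).
    assert (EB : (fun z => isat IofN (Etr false a) (inl z)) = nsat M false a)
      by (apply pred_ext; intro; apply IHa).
    split.
    + intros H v u Hv HR. apply IHc.
      set (m := inr (v, fun z => isat IofN (Etr true a) (inl z)) : SW).
      apply (H (inl v) m Hv (conj eq_refl eq_refl) m (inl u) (S_refl m)).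
      simpl. rewrite EA, EB; exact HR.
    + intros H [v|[v X]] u Hv; simpl in Hv; [|tauto].
      destruct u as [u|[u0 X1]]; simpl; [tauto|].
      intros [E1 E2] [v2|[v1 X2]] u2 Hu; simpl in Hu; [tauto|].
      destruct Hu as [Hu E3]. subst.
      destruct u2 as [x|[x Xx]]; simpl; [|tauto].
      rewrite EA, EB. intro HR. apply IHc. apply (H v1 x); auto.
      eapply nle_trans; eauto.
  - assert (EA : (fun z => isat IofN (Etr true a) (inl z)) = nsat M true a)
      by (apply pred_ext; intro; apply IHa).
    assert (EB : (fun z => isat IofN (Etr false a) (inl z)) = nsat M false a)
      by (apply pred_ext; intro; apply IHa).
    split.
    + intros [[u|[u X]] [HR [u2 [HR2 HC]]]]; simpl in HR; [tauto|].
      destruct HR as [E1 E2]; subst.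
      destruct u2 as [x|[x Xx]]; simpl in HR2; [|tauto].
      rewrite EA, EB in HR2. exists x; split; auto. apply IHc; auto.
    + intros [x [HR HC]].
      exists (inr (w, fun z => isat IofN (Etr true a) (inl z))); simpl; split; auto.
      exists (inl x); simpl; split.
      * rewrite EA, EB; exact HR.
      * apply IHc; auto.
Qed.
End IofN.

Theorem proposition9 (Gamma Delta : form -> Prop) :
  N4CK Gamma Delta <-> IntCKe (Eimg Gamma) (Eimg Delta).
Proof.
  split.
  - intros HN [M [w [HG HD]]]. apply HN. exists (NofI M), w. split.
    + intros g Hg. apply NofI_sat. apply HG. exists g; auto.
    + intros d Hd Hs. apply (HD (Epm d)). exists d; auto. apply NofI_sat; auto.
  - intros HI [M [w [HG HD]]]. apply HI. exists (IofN M), (inl w). split.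
    + intros g [phi [Hg E]]; subst. apply IofN_sat; auto.
    + intros d [phi [Hd E]] Hs; subst. apply (HD phi Hd). apply IofN_sat; auto.
Qed.
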